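(* Let $\sigma$ be a super filling of $\mathrm{dg}(\lambda)$ (order $<_2$) and let $j$ be such that $\lambda_j=\lambda_{j+1}$. Then $\mathrm{maj}(\tau_j(\sigma))=\mathrm{maj}(\sigma)$.
   Context: Let $\lambda=(\lambda_1\ge\dots\ge\lambda_k>0)$ be a partition; $\mathrm{dg}(\lambda)=\{(r,i):1\le i\le k,1\le r\le\lambda_i\}$, $(r,i)$ being row $r$ from the bottom and column $i$ from the left (columns bottom-justified of heights $\lambda_i$); $\mathrm{leg}((r,i))=\lambda_i-r$. $\mathcal A=\{1,\bar1,2,\bar2,\dots\}$ consists of positive letters $i$ and negative letters $\bar i$, totally ordered by $<_2$: $0<1<2<3<\cdots<\bar3<\bar2<\bar1$. $I(a,b)=1$ if $a>b$ or $a=b$ is negative, and $I(a,b)=0$ if $a<b$ or $a=b$ is positive. A super filling is $\sigma:\mathrm{dg}(\lambda)\to\mathcal A$; a cell $u=(r,i)$, $r>1$, is a descent if $I(\sigma(u),\sigma((r-1,i)))=1$, and $\mathrm{maj}(\sigma)=\sum_{\text{descents }u}(\mathrm{leg}(u)+1)$. For letters $(a,b,c)$ (with $a$ possibly $0$) say $(a,b,c)$ is quinv if exactly one of $I(a,b)=1$, $I(c,b)=0$, $I(a,c)=0$ holds. The operator $\tau_j$ (for $\lambda_j=\lambda_{j+1}=k'$): write $a_r=\sigma((r,j))$, $b_r=\sigma((r,j+1))$. Let $r_{\max}$ be the largest $r\in\{2,\dots,k'\}$ such that $(a_r,a_{r-1},b_{r-1})$ and $(b_r,a_{r-1},b_{r-1})$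 are either both quinv or both not quinv; if no such $r$ exists, $r_{\max}=1$. Then $\tau_j(\sigma)$ is obtained from $\sigma$ by exchanging the entries of cells $(i,j)$ and $(i,j+1)$ for every $i$ with $r_{\max}\le i\le k'$, all other entries unchanged. *)

(* Defs.v *)
From mathcomp Require Import all_boot.
Set Implicit Arguments. Unset Strict Implicit. Unset Printing Implicit Defensive.

(* Letters of the super alphabet: [Pos i] is the positive letter i,
   [Neg i] the negative letter \bar i (valid letters have i >= 1). *)
Inductive letter := Pos of nat | Neg of nat.

Definition valid_letter (a : letter) : bool :=
  match a with Pos i => 0 < i | Neg i => 0 < i end.

Definition lt2 (a b : letter) : bool :=
  match a, b with
  | Pos i, Pos j => i < j
  | Pos _, Neg _ => true
  | Neg _, Pos _ => false
  | Neg i, Neg j => j < i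
  end.

Definition Ind (a b : letter) : bool :=
  match a, b with
  | Neg i, Neg j => (i == j) || lt2 b a
  | _, _ => lt2 b a
  end.

Definition quinv (a b c : letter) : bool :=
  (Ind a b + ~~ Ind c b + ~~ Ind a c == 1)%N.

Definition is_partition (lam : seq nat) : bool :=
  sorted geq lam && all (fun x => 0 < x) lam.

(* lambda_i, 1-indexed *)
Definition part (lam : seq nat) (i : nat) : nat := nth 0 lam i.-1.

(* A filling is a function (r, i) |-> letter; only values on the diagram
   dg(lam) = {(r,i) : 1 <= i <= k, 1 <= r <= lambda_i} matter. *)
Definition filling := nat -> nat -> letter.

Definition super_filling (lam : seq nat) (sigma : filling) : Prop :=
  forall i r, 1 <= i <= size lam -> 1 <= r <= part lam i -> valid_letter (sigma r i).

(* maj(sigma) = sum over descents u = (r,i), r > 1, of leg(u) + 1 = lambda_i - r + 1 *)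
Definition maj (lam : seq nat) (sigma : filling) : nat :=
  \sum_(1 <= i < (size lam).+1)
    \sum_(2 <= r < (part lam i).+1)
      (if Ind (sigma r i) (sigma r.-1 i) then part lam i - r + 1 else 0).

Definition rmax (lam : seq nat) (j : nat) (sigma : filling) : nat :=
  let k' := part lam j in
  maxn 1 (\max_(2 <= r < k'.+1 |
            quinv (sigma r j) (sigma r.-1 j) (sigma r.-1 j.+1)
            == quinv (sigma r j.+1) (sigma r.-1 j) (sigma r.-1 j.+1)) r).

Definition tau (lam : seq nat) (j : nat) (sigma : filling) : filling :=
  let k' := part lam j in
  let m := rmax lam j sigma in
  fun r i =>
    if (m <= r <= k') && (i == j) then sigma r j.+1
    else if (m <= r <= k') && (i == j.+1) then sigma r j
    else sigma r i.

(* Main.v *)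
Require Import Defs.
From mathcomp Require Import all_boot zify.

Lemma key a b c d : quinv a c d = quinv b c d ->
  (Ind a c + Ind b d = Ind b c + Ind a d)%N.
Proof.
case: a => a; case: b => b; case: c => c; case: d => d;
rewrite /quinv /Ind /lt2; lia.
Qed.

Lemma bigmax_mem (P : pred nat) (s : seq nat) :
  \max_(r <- s | P r) r = 0 \/ (P (\max_(r <- s | P r) r) /\ True).
Proof.
elim: s => [|x s IH]; first by rewrite big_nil; left.
rewrite big_cons; case Px: (P x) => /=; last exact: IH.
case: IH => [->|[H _]]; first by rewrite maxn0 Px; right.
rewrite /maxn; case: ifP => _; by right.
Qed.

Lemma rmax_cond lam j sigma : 2 <= rmax lam j sigma ->
  let m := rmax lam j sigma in
  quinv (sigma m j) (sigma m.-1 j) (sigma m.-1 j.+1)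
  = quinv (sigma m j.+1) (sigma m.-1 j) (sigma m.-1 j.+1).
Proof.
rewrite /rmax /=.
case: (bigmax_mem (fun r => quinv (sigma r j) (sigma r.-1 j) (sigma r.-1 j.+1)
            == quinv (sigma r j.+1) (sigma r.-1 j) (sigma r.-1 j.+1))
         (index_iota 2 (part lam j).+1)) => [H|[H _]].
  by rewrite H.
set X := (\max_(_ <= r < _ | _) r) in H *.
move=> h; have E : maxn 1 X = X.
  by apply/maxn_idPr; move: h; rewrite /maxn; case: ifP => //; lia.
rewrite E; by move/eqP: H.
Qed.

Lemma row (s : filling) j K m r w : 2 <= r <= K ->
  (m = r -> quinv (s r j) (s r.-1 j) (s r.-1 j.+1)
            = quinv (s r j.+1) (s r.-1 j) (s r.-1 j.+1)) ->
  let t := fun r i => if (m <= r <= K) && (i == j) then s r j.+1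
     else if (m <= r <= K) && (i == j.+1) then s r j else s r i in
  ((if Ind (t r j) (t r.-1 j) then w else 0)
   + (if Ind (t r j.+1) (t r.-1 j.+1) then w else 0)
  = (if Ind (s r j) (s r.-1 j) then w else 0)
   + (if Ind (s r j.+1) (s r.-1 j.+1) then w else 0))%N.
Proof.
move=> /andP[r2 rK] Hq t; rewrite /t /=.
have nj : (j.+1 == j) = false by elim: j {Hq t}.
have nj' : (j == j.+1) = false by elim: j {Hq t nj}.
rewrite ?eqxx ?nj ?nj' !andbF !andbT /=.
case: (ltngtP r m) => h.
- have E1 : (m <= r) = false by apply/negbTE; rewrite -ltnNge.
  have E2 : (m <= r.-1) = false by apply/negbTE; rewrite -ltnNge; lia.
  by rewrite ?E1 ?E2.
- have E1 : (m <= r) = true by lia.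
  have E2 : (m <= r.-1) = true by lia.
  have E3 : r.-1 <= K by lia.
  by rewrite ?E1 ?E2 ?E3 ?rK /= addnC.
- subst m. rewrite ?leqnn ?rK /=.
  have E1 : (r <= r.-1) = false by lia.
  rewrite E1.
  rewrite /=; move: (@key _ _ _ _ (Hq erefl)).
  case: (Ind (s r j) (s r.-1 j)); case: (Ind (s r j.+1) (s r.-1 j.+1));
     case: (Ind (s r j.+1) (s r.-1 j)); case: (Ind (s r j) (s r.-1 j.+1)); move=> /= E; lia.
Qed.

Theorem mainTheorem13 (lam : seq nat) (sigma : filling) (j : nat) :
  is_partition lam -> super_filling lam sigma ->
  1 <= j -> j < size lam -> part lam j = part lam j.+1 ->
  maj lam (tau lam j sigma) = maj lam sigma.
Proof.
move=> _ _ j1 jn Hp.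
rewrite /maj.
have split3 : forall F : nat -> nat, \sum_(1 <= i < (size lam).+1) F i
   = \sum_(1 <= i < j) F i + (F j + F j.+1) + \sum_(j.+2 <= i < (size lam).+1) F i.
  move=> F.
  rewrite (big_cat_nat _ (n := j)) //; last by lia.
  rewrite (big_cat_nat _ (m := j) (n := j.+2)) //; last by lia.
  rewrite /= big_nat_recr //= big_nat1 addnA //.
rewrite !split3; congr (_ + _ + _).
- apply: eq_big_nat => i Hi; apply: eq_bigr => r _.
  rewrite /tau.
  have -> : (i == j) = false by apply/eqP; lia.
  have -> : (i == j.+1) = false by apply/eqP; lia.
  by rewrite !andbF.
- rewrite -Hp -!big_split /=; apply: eq_big_nat => r Hr.
  rewrite /tau.
  apply: (@row sigma j (part lam j) (rmax lam j sigma)).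
    lia.
  move=> E; have := @rmax_cond lam j sigma.
  rewrite E /=; apply; lia.
- apply: eq_big_nat => i Hi; apply: eq_bigr => r _.
  rewrite /tau.
  have -> : (i == j) = false by apply/eqP; lia.
  have -> : (i == j.+1) = false by apply/eqP; lia.
  by rewrite !andbF.
Qed.
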